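(* Every fan in $\mathsf{c}\text{-}\mathsf{Fan}^{+-}_{\rm sc}(2)$ can be obtained from the fan $\Sigma(0,0;0,0)$, whose 2-dimensional cones are the four closed coordinate quadrants, by a finite sequence of subdivisions.
   Context: $\mathsf{c}\text{-}\mathsf{Fan}^{+-}_{\rm sc}(2)$ is the set of complete fans $\Sigma$ in $\mathbb{R}^2$ (cones strongly convex rational polyhedral) that are nonsingular (each 2-dimensional cone is generated by a $\mathbb{Z}$-basis of $\mathbb{Z}^2$), contain $\operatorname{cone}\{(1,0),(0,1)\}$, $\operatorname{cone}\{(-1,0),(0,-1)\}$ and $\operatorname{cone}\{(-1,0),(0,1)\}$, have every cone contained in a closed coordinate quadrant, and have every ray a face of exactly two 2-dimensional cones. Subdivision: for a 2-dimensional cone $\sigma=\operatorname{cone}\{u,v\}$ ($u,v$ primitive) of a nonsingular fan $\Sigma$, $D_\sigma(\Sigma)$ has rays $\Sigma_1\cup\{\mathbb{R}_{\ge0}(u+v)\}$ and 2-dimensional cones $(\Sigma_2\setminus\{\sigma\})\cup\{\operatorname{cone}\{u,u+v\},\operatorname{cone}\{v,u+v\}\}$. *)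

(* Defs.v *)
From HB Require Import structures.
From mathcomp Require Import all_boot all_order all_algebra.
From mathcomp Require Import finmap.
From mathcomp Require Import reals.
Set Implicit Arguments. Unset Strict Implicit. Unset Printing Implicit Defensive.
Import Order.TTheory GRing.Theory Num.Theory.
Local Open Scope fset_scope.
Local Open Scope ring_scope.

Definition Z2 := (int * int)%type.
Definition addZ2 (u v : Z2) : Z2 := (u.1 + v.1, u.2 + v.2).
Definition detZ2 (u v : Z2) : int := u.1 * v.2 - u.2 * v.1.
Definition primitiveZ2 (w : Z2) : bool := gcdz w.1 w.2 == 1.

(* A fan in R^2 whose cones are all (simplicial) cones generated by primitive
   lattice vectors, represented by its rays Sigma_1 (primitive generators) and
   its 2-dimensional cones Sigma_2 (each given by its set of primitive
   generators).  The full set of cones is {0} ∪ rays ∪ 2-cones. *)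
Record fan2 := Fan2 { rays : {fset Z2}; cones2 : {fset {fset Z2}} }.

Definition allgens (F : fan2) (S : {fset Z2}) : Prop :=
  S = fset0 \/ (exists u, u \in rays F /\ S = [fset u]) \/ S \in cones2 F.

Section Geometry.
Variable R : realType.

Definition pt (w : Z2) : R * R := (w.1%:~R, w.2%:~R).

Definition cone (S : {fset Z2}) (x : R * R) : Prop :=
  exists c : Z2 -> R, (forall w, w \in S -> 0 <= c w) /\
    x = (\sum_(w <- S) c w * (pt w).1, \sum_(w <- S) c w * (pt w).2).

Definition dot (m x : R * R) : R := m.1 * x.1 + m.2 * x.2.

Definition is_face (tau sigma : R * R -> Prop) : Prop :=
  exists m : R * R, (forall x, sigma x -> 0 <= dot m x) /\
    (forall x, tau x <-> (sigma x /\ dot m x = 0)).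

Definition in_closed_quadrant (C : R * R -> Prop) : Prop :=
  exists s1 s2 : R, (s1 = 1 \/ s1 = -1) /\ (s2 = 1 \/ s2 = -1) /\
    forall x, C x -> 0 <= s1 * x.1 /\ 0 <= s2 * x.2.

Definition nonsingular_fan (F : fan2) : Prop :=
  (forall u, u \in rays F -> primitiveZ2 u) /\
  (forall sigma, sigma \in cones2 F -> exists u v,
      [/\ u \in rays F, v \in rays F, sigma = [fset u; v] &
          (detZ2 u v = 1 \/ detZ2 u v = -1)]) /\
  (forall S T, allgens F S -> allgens F T ->
      is_face (fun x => cone S x /\ cone T x) (cone S) /\
      is_face (fun x => cone S x /\ cone T x) (cone T)).

Definition complete_fan (F : fan2) : Prop :=
  forall x : R * R, exists S, allgens F S /\ cone S x.

Definition in_cFan_pm_sc (F : fan2) : Prop :=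
  nonsingular_fan F /\ complete_fan F /\
  [fset ((1, 0) : Z2); (0, 1)] \in cones2 F /\
  [fset ((-1, 0) : Z2); (0, -1)] \in cones2 F /\
  [fset ((-1, 0) : Z2); (0, 1)] \in cones2 F /\
  (forall S, allgens F S -> in_closed_quadrant (cone S)) /\
  (forall u, u \in rays F -> exists s1 s2,
     s1 \in cones2 F /\ s2 \in cones2 F /\ s1 != s2 /\
     is_face (cone [fset u]) (cone s1) /\
     is_face (cone [fset u]) (cone s2) /\
     forall s, s \in cones2 F -> is_face (cone [fset u]) (cone s) ->
       s = s1 \/ s = s2).

End Geometry.

Definition subdiv (F : fan2) (u v : Z2) : fan2 :=
  Fan2 (addZ2 u v |` rays F)
       ((cones2 F `\ [fset u; v]) `|` [fset [fset u; addZ2 u v]; [fset v; addZ2 u v]]).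

Definition Sigma0 : fan2 :=
  Fan2 [fset ((1, 0) : Z2); (0, 1); (-1, 0); (0, -1)]
       [fset [fset ((1, 0) : Z2); (0, 1)]; [fset ((-1, 0) : Z2); (0, 1)];
             [fset ((-1, 0) : Z2); (0, -1)]; [fset ((1, 0) : Z2); (0, -1)]].

Inductive obtained_by_subdivisions (F0 : fan2) : fan2 -> Prop :=
| obs_refl : obtained_by_subdivisions F0 F0
| obs_step F u v : obtained_by_subdivisions F0 F -> u != v ->
    [fset u; v] \in cones2 F -> obtained_by_subdivisions F0 (subdiv F u v).

(* Main.v *)
Require Import Defs.
From HB Require Import structures.
From mathcomp Require Import all_boot all_order all_algebra finmap reals.
From mathcomp Require Import ring lra zify.
Set Implicit Arguments. Unset Strict Implicit. Unset Printing Implicit Defensive.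
Import Order.TTheory GRing.Theory Num.Theory.
Local Open Scope fset_scope.
Local Open Scope ring_scope.

Lemma prod1 (x y : int) : 0 <= x -> 0 <= y -> (x * y = 1 \/ x * y = -1) -> x = 1 /\ y = 1.
Proof.
move=> x0 y0 [h|h]; last by nia.
have yn : y != 0 by apply: contraPneq h => ->; rewrite mulr0.
have xn : x != 0 by apply: contraPneq h => ->; rewrite mul0r.
have y1 : 1 <= y by lia.
have x1 : 1 <= x by lia.
have := ler_wpM2l x0 y1; have := ler_wpM2r y0 x1; rewrite mulr1 mul1r; lia.
Qed.
Lemma unit_prod (x y : int) : (x * y = 1 \/ x * y = -1) -> (x = 1 \/ x = -1) /\ (y = 1 \/ y = -1).
Proof.
move=> h.
have h' : `|x| * `|y| = 1 \/ `|x| * `|y| = -1 by rewrite -normrM; case: h => ->; left.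
have [] := @prod1 `|x| `|y| (normr_ge0 x) (normr_ge0 y) h'.
lia.
Qed.
Lemma quad_int (e1 e2 u1 u2 v1 v2 : int) : (e1 = 1 \/ e1 = -1) -> (e2 = 1 \/ e2 = -1) ->
  (u1 * v2 - u2 * v1 = 1 \/ u1 * v2 - u2 * v1 = -1) ->
  0 <= e1 * u1 -> 0 <= e2 * u2 -> 0 <= e1 * v1 -> 0 <= e2 * v2 ->
  ((e2 * u2 = 0 /\ e1 * v1 = 0) \/ (e1 * u1 = 0 /\ e2 * v2 = 0)) ->
  (u1 = e1 /\ u2 = 0 /\ v1 = 0 /\ v2 = e2) \/ (u1 = 0 /\ u2 = e2 /\ v1 = e1 /\ v2 = 0).
Proof.
move=> he1 he2 hd h1 h2 h3 h4 [[h5 h6]|[h5 h6]].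
- have u2z : u2 = 0 by case: he2 h5 => ->; lia.
  have v1z : v1 = 0 by case: he1 h6 => ->; lia.
  rewrite u2z v1z mul0r subr0 in hd.
  have [hu hv] := @unit_prod _ _ hd.
  left; case: he1 he2 h1 h4 => -> [] -> ; lia.
- have u1z : u1 = 0 by case: he1 h5 => ->; lia.
  have v2z : v2 = 0 by case: he2 h6 => ->; lia.
  rewrite u1z v2z mul0r add0r in hd.
  have hd' : u2 * v1 = 1 \/ u2 * v1 = -1 by case: hd => h; [right|left]; rewrite -[LHS]opprK h ?opprK.
  have [hu hv] := @unit_prod _ _ hd'.
  right; case: he1 he2 h2 h3 => -> [] -> ; lia.
Qed.


Definition Q4 (u : Z2) := (0 <= u.1) && (u.2 <= 0).
Definition op4 (u : Z2) := (0 < u.1) && (u.2 < 0).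
Definition q1 : {fset Z2} := [fset ((1, 0) : Z2); (0, 1)].
Definition q2 : {fset Z2} := [fset ((-1, 0) : Z2); (0, 1)].
Definition q3 : {fset Z2} := [fset ((-1, 0) : Z2); (0, -1)].
Definition q4 : {fset Z2} := [fset ((1, 0) : Z2); (0, -1)].

Definition Pinv (F : fan2) : Prop :=
 [/\ q1 \in cones2 F, q2 \in cones2 F, q3 \in cones2 F,
  (forall s, s \in cones2 F -> forall x, x \in s -> x \in rays F) &
  [/\ (forall s, s \in cones2 F -> s = q1 \/ s = q2 \/ s = q3 \/
     exists u v, [/\ s = [fset u; v], Q4 u, Q4 v & detZ2 u v = -1]),
  (forall u, u \in rays F -> exists s1 s2, [/\ s1 \in cones2 F, s2 \in cones2 F,
     s1 != s2, (u \in s1) && (u \in s2) &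
     forall s, s \in cones2 F -> u \in s -> s = s1 \/ s = s2]) &
  (forall u, u \in rays F -> op4 u -> exists a b,
     [/\ [fset a; u] \in cones2 F, [fset u; b] \in cones2 F,
         detZ2 a u = -1 & detZ2 u b = -1])]].

Section Geo.
Variable R : realType.

Lemma cone2P (p q : Z2) (x : R * R) : p != q ->
  cone [fset p; q] x <-> exists a b : R, [/\ 0 <= a, 0 <= b &
    x = (a * (pt R p).1 + b * (pt R q).1, a * (pt R p).2 + b * (pt R q).2)].
Proof.
move=> pq; have pNq : p \notin [fset q] by rewrite inE.
split.
- case=> c [c0 ->]; exists (c p), (c q); split; try apply: c0; rewrite ?inE ?eqxx ?orbT //.
  by rewrite !big_fsetU1 // !big_seq_fset1.
- case=> a [b [a0 b0 ->]]; exists (fun w => if w == p then a else b); split.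
    by move=> w _; case: ifP.
  have qp : (q == p) = false by rewrite eq_sym (negbTE pq).
  by rewrite !big_fsetU1 // !big_seq_fset1 eqxx qp.
Qed.

Lemma cone1P (u : Z2) (x : R * R) :
  cone [fset u] x <-> exists a : R, 0 <= a /\ x = (a * (pt R u).1, a * (pt R u).2).
Proof.
split.
- case=> c [c0 ->]; exists (c u); rewrite !big_seq_fset1; split => //; apply: c0.
  by rewrite inE.
- case=> a [a0 ->]; by exists (fun _ => a); rewrite !big_seq_fset1.
Qed.


Lemma sum_ind (S : {fset Z2}) u (a : R) (f : Z2 -> R) : u \in S ->
  \sum_(w <- S) (if w == u then a else 0) * f w = a * f u.
Proof.
move=> uS; rewrite (big_fsetD1 u) //= eqxx big1_seq ?addr0 // => w /andP[_].
by rewrite in_fsetD1 => /andP[/negbTE -> _]; rewrite mul0r.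
Qed.

Lemma cone_sub1 (S : {fset Z2}) u (x : R * R) : u \in S -> cone [fset u] x -> cone S x.
Proof.
move=> uS /cone1P [a [a0 ->]]; exists (fun w => if w == u then a else 0); split.
  by move=> w _; case: ifP.
by rewrite !sum_ind.
Qed.

Lemma cone_gen (S : {fset Z2}) u : u \in S -> cone S (pt R u).
Proof. by move=> uS; apply: (cone_sub1 uS); apply/cone1P; exists 1; rewrite !mul1r. Qed.

Lemma is_face_ext (X Y S : R * R -> Prop) :
  (forall x, X x <-> Y x) -> is_face X S -> is_face Y S.
Proof.
move=> XY [m [Hm HX]]; exists m; split => // x; rewrite -XY; exact: HX.
Qed.

Lemma face_full (X S : R * R -> Prop) (P Q : R * R) :
  P.1 * Q.2 - P.2 * Q.1 != 0 -> is_face X S -> X P -> X Q -> forall x, S x -> X x.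
Proof.
move=> dn [m [Hm HX]] XP XQ x Sx.
have [_ mP] := (HX P).1 XP; have [_ mQ] := (HX Q).1 XQ.
move: mP mQ; rewrite /dot => mP mQ.
have e1 : m.1 * (P.1 * Q.2 - P.2 * Q.1) = Q.2 * (m.1 * P.1 + m.2 * P.2) - P.2 * (m.1 * Q.1 + m.2 * Q.2) by ring.
have e2 : m.2 * (P.1 * Q.2 - P.2 * Q.1) = P.1 * (m.1 * Q.1 + m.2 * Q.2) - Q.1 * (m.1 * P.1 + m.2 * P.2) by ring.
rewrite mP mQ !mulr0 subrr in e1 e2.
move/eqP: e1; rewrite mulf_eq0 (negbTE dn) orbF => /eqP m1.
move/eqP: e2; rewrite mulf_eq0 (negbTE dn) orbF => /eqP m2.
by apply/HX; split => //; rewrite /dot m1 m2 !mul0r addr0.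
Qed.

Lemma detR (p q : Z2) : (detZ2 p q)%:~R = (pt R p).1 * (pt R q).2 - (pt R p).2 * (pt R q).1 :> R.
Proof. by rewrite /detZ2 intrB !intrM. Qed.


Lemma Z2_eq (u v : Z2) : u.1 = v.1 -> u.2 = v.2 -> u = v.
Proof. by case: u v => [? ?] [? ?] /= -> ->. Qed.

Lemma pos_sum0 (a x b y : R) : 0 < a -> 0 <= x -> 0 <= b -> 0 <= y ->
  a * x + b * y = 0 -> x = 0.
Proof.
move=> a0 x0 b0 y0 e.
have h1 : 0 <= a * x by rewrite mulr_ge0 // ltW.
have h2 : 0 <= b * y by rewrite mulr_ge0.
have : a * x = 0 by lra.
by move/eqP; rewrite mulf_eq0 gt_eqF //= => /eqP.
Qed.

Lemma face_mem_half (p q u : Z2) (a b : R) : p != q ->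
  (detZ2 p q = 1 \/ detZ2 p q = -1) -> primitiveZ2 u -> 0 < a -> 0 <= b ->
  pt R u = (a * (pt R p).1 + b * (pt R q).1, a * (pt R p).2 + b * (pt R q).2) ->
  is_face (@cone R [fset u]) (cone [fset p; q]) -> u = p.
Proof.
move=> pq dpq pu a0 b0 E [m [Hm HX]].
have [_ mu] := (HX (pt R u)).1 (cone_gen (fset11 u)).
have mP0 := Hm _ (cone_gen (fset21 p q)).
have mQ0 := Hm _ (cone_gen (fset22 p q)).
have mP : dot m (pt R p) = 0.
  apply: (pos_sum0 a0 mP0 b0 mQ0); rewrite -mu E /dot /=; ring.
have /cone1P [l [l0 El]] := (HX (pt R p)).2 (conj (cone_gen (fset21 p q)) mP).
move: E El; rewrite /pt /= => -[E1 E2] [F1 F2].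
have dR := detR p q; rewrite /pt /= in dR.
have dn : (detZ2 p q)%:~R != 0 :> R by case: dpq => ->; rewrite ?oppr_eq0 oner_eq0.
have bz : b = 0.
  have : b * (detZ2 p q)%:~R = 0.
    rewrite dR; transitivity (- ((u.1)%:~R * (p.2)%:~R - (u.2)%:~R * (p.1)%:~R) :> R).
      by rewrite E1 E2; ring.
    by rewrite F1 F2; ring.
  by move/eqP; rewrite mulf_eq0 (negbTE dn) orbF => /eqP.
rewrite bz !mul0r !addr0 in E1 E2.
set k := detZ2 p q * detZ2 u q.
have dd : (detZ2 p q)%:~R * (detZ2 p q)%:~R = 1 :> R.
  by case: dpq => ->; rewrite ?mulrNN mulr1.
have ak : a = k%:~R.
  rewrite /k intrM (detR u q) dR /pt /= E1 E2.
  transitivity (a * ((detZ2 p q)%:~R * (detZ2 p q)%:~R)); first by rewrite dd mulr1.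
  by rewrite dR; ring.
have U1 : u.1 = k * p.1 by apply/eqP; rewrite -(eqr_int R) intrM -ak E1.
have U2 : u.2 = k * p.2 by apply/eqP; rewrite -(eqr_int R) intrM -ak E2.
have k0 : 0 < k by rewrite -(ltr0z R) -ak.
have kd : (k %| gcdz u.1 u.2)%Z.
  by rewrite dvdz_gcd U1 U2; apply/andP; split; apply: dvdz_mulr; exact: dvdzz.
move: pu kd; rewrite /primitiveZ2 => /eqP ->; rewrite dvdz1 => /eqP k1.
have kk : k = 1.
  by move: k0 k1; clear; case: k => // n _ /= ->.
by apply: Z2_eq; rewrite ?U1 ?U2 kk mul1r.
Qed.


Lemma detZ2C (p q : Z2) : detZ2 q p = - detZ2 p q.
Proof. rewrite /detZ2; ring. Qed.

Lemma detZ2_neq (p q : Z2) : detZ2 p q != 0 -> p != q.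
Proof. by apply: contra => /eqP ->; rewrite /detZ2 mulrC subrr. Qed.

Lemma face_mem (p q u : Z2) : p != q ->
  (detZ2 p q = 1 \/ detZ2 p q = -1) -> primitiveZ2 u ->
  is_face (@cone R [fset u]) (cone [fset p; q]) -> u \in [fset p; q].
Proof.
move=> pq dpq pu Hf.
have Hf' := Hf; case: Hf' => m [_ HX].
have [/(cone2P _ pq) [a [b [a0 b0 E]]] _] := (HX (pt R u)).1 (cone_gen (fset11 u)).
have [a_pos | a_z] := boolP (0 < a).
  by rewrite (face_mem_half pq dpq pu a_pos b0 E Hf) fset21.
have az : a = 0 by apply/eqP; rewrite eq_le a0 andbT leNgt.
have [b_pos | b_z] := boolP (0 < b).
  have qp : q != p by rewrite eq_sym.
  have dqp : detZ2 q p = 1 \/ detZ2 q p = -1.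
    by rewrite detZ2C; case: dpq => ->; [right | left; rewrite opprK].
  have E' : pt R u = (b * (pt R q).1 + a * (pt R p).1, b * (pt R q).2 + a * (pt R p).2).
    by rewrite E /= (addrC (a * _)) (addrC (a * (pt R p).2)).
  have Hf2 : is_face (@cone R [fset u]) (cone [fset q; p]) by rewrite fsetUC.
  by rewrite (face_mem_half qp dqp pu b_pos a0 E' Hf2) fset22.
have bz : b = 0 by apply/eqP; rewrite eq_le b0 andbT leNgt.
move: E; rewrite az bz !mul0r addr0 /pt => -[/eqP E1 /eqP E2].
move: pu; rewrite /primitiveZ2.
by rewrite intr_eq0 in E1; rewrite intr_eq0 in E2; rewrite (eqP E1) (eqP E2).
Qed.

Lemma mem_face (F : fan2) u s : nonsingular_fan R F -> u \in rays F ->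
  s \in cones2 F -> u \in s -> is_face (@cone R [fset u]) (cone s).
Proof.
move=> [_ [_ H3]] uR sC us.
have [_ H] := H3 [fset u] s (or_intror (or_introl (ex_intro _ u (conj uR erefl))))
   (or_intror (or_intror sC)).
apply: is_face_ext H => x; split; first by case.
by move=> h; split => //; apply: cone_sub1 h.
Qed.


Lemma nn_sum0 (a x b y : R) : 0 <= a -> 0 <= x -> 0 <= b -> 0 <= y ->
  a * x + b * y = 0 -> a * x = 0 /\ b * y = 0.
Proof.
move=> a0 x0 b0 y0 e.
have h1 : 0 <= a * x by rewrite mulr_ge0.
have h2 : 0 <= b * y by rewrite mulr_ge0.
split; lra.
Qed.

Lemma prod0 (a x : R) : a * x = 0 -> a = 0 \/ x = 0.
Proof. by move/eqP; rewrite mulf_eq0 => /orP[] /eqP; [left|right]. Qed.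

Lemma quad_real (x1 x2 y1 y2 al be ga de : R) :
  0 <= x1 -> 0 <= x2 -> 0 <= y1 -> 0 <= y2 ->
  0 <= al -> 0 <= be -> 0 <= ga -> 0 <= de ->
  al * x1 + be * y1 = 1 -> al * x2 + be * y2 = 0 ->
  ga * x1 + de * y1 = 0 -> ga * x2 + de * y2 = 1 ->
  x1 * y2 - x2 * y1 != 0 ->
  (x2 = 0 /\ y1 = 0) \/ (x1 = 0 /\ y2 = 0).
Proof.
move=> x10 x20 y10 y20 al0 be0 ga0 de0 e1 e2 e3 e4 dn.
have [h1 h2] := nn_sum0 al0 x20 be0 y20 e2.
have [h3 h4] := nn_sum0 ga0 x10 de0 y10 e3.
have [x2z|x2n] := eqVneq x2 0.
  left; split => //.
  rewrite x2z mul0r subr0 in dn.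
  have x1n : x1 != 0 by apply: contraNneq dn => ->; rewrite mul0r.
  have gz : ga = 0 by case: (prod0 h3) => // /eqP; rewrite (negbTE x1n).
  rewrite gz mul0r add0r in e4.
  have dn0 : de != 0 by apply: contra_eq_neq e4 => ->; rewrite mul0r; lra.
  by case: (prod0 h4) => // /eqP; rewrite (negbTE dn0).
right.
have az : al = 0 by case: (prod0 h1) => // /eqP; rewrite (negbTE x2n).
rewrite az mul0r add0r in e1.
have bn : be != 0 by apply: contra_eq_neq e1 => ->; rewrite mul0r; lra.
have y2z : y2 = 0 by case: (prod0 h2) => // /eqP; rewrite (negbTE bn).
have y1n : y1 != 0 by apply: contra_eq_neq e1 => ->; rewrite mulr0; lra.
have dz : de = 0 by case: (prod0 h4) => // /eqP; rewrite (negbTE y1n).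
rewrite dz mul0r addr0 in e4.
have gn : ga != 0 by apply: contra_eq_neq e4 => ->; rewrite mul0r; lra.
split => //.
by case: (prod0 h3) => // /eqP; rewrite (negbTE gn).
Qed.


Lemma quad_fix (F : fan2) (e1 e2 : int) (u v : Z2) : nonsingular_fan R F ->
  [fset u; v] \in cones2 F -> [fset ((e1, 0) : Z2); (0, e2)] \in cones2 F ->
  (e1 = 1 \/ e1 = -1) -> (e2 = 1 \/ e2 = -1) -> (detZ2 u v = 1 \/ detZ2 u v = -1) ->
  0 <= e1 * u.1 -> 0 <= e2 * u.2 -> 0 <= e1 * v.1 -> 0 <= e2 * v.2 ->
  [fset u; v] = [fset ((e1, 0) : Z2); (0, e2)].
Proof.
move=> NS SC TC he1 he2 hd h1 h2 h3 h4.
have [_ [_ H3]] := NS.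
have dn : detZ2 u v != 0 by case: hd => ->; rewrite ?oppr_eq0 oner_eq0.
have uv : u != v by apply: detZ2_neq.
have ee1 : e1 * e1 = 1 by case: he1 => ->; rewrite ?mulrNN mulr1.
have ee2 : e2 * e2 = 1 by case: he2 => ->; rewrite ?mulrNN mulr1.
have e1n : e1 != 0 by case: he1 => ->; rewrite ?oppr_eq0 oner_eq0.
have E12 : ((e1, 0) : Z2) != (0, e2) by apply: contra e1n => /eqP [] ->.
have inT : forall x : Z2, 0 <= e1 * x.1 -> 0 <= e2 * x.2 ->
    cone [fset ((e1, 0) : Z2); (0, e2)] (pt R x).
  move=> x hx1 hx2; apply/(cone2P _ E12).
  exists (e1 * x.1)%:~R, (e2 * x.2)%:~R; split; rewrite ?ler0z //.
  rewrite /pt /=; congr (_, _); rewrite -!intrM -intrD; congr intmul.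
    by rewrite mulr0 addr0 mulrAC ee1 mul1r.
  by rewrite mulr0 add0r mulrAC ee2 mul1r.
have [_ HT] := H3 [fset u; v] [fset ((e1, 0) : Z2); (0, e2)]
   (or_intror (or_intror SC)) (or_intror (or_intror TC)).
have dR : (pt R u).1 * (pt R v).2 - (pt R u).2 * (pt R v).1 != 0.
  by rewrite -detR intr_eq0.
have full := face_full dR HT (conj (cone_gen (fset21 u v)) (inT u h1 h2))
                              (conj (cone_gen (fset22 u v)) (inT v h3 h4)).
have [/(cone2P _ uv) [al [be [al0 be0 EA]]] _] := full _ (cone_gen (fset21 _ _)).
have [/(cone2P _ uv) [ga [de [ga0 de0 EB]]] _] := full _ (cone_gen (fset22 _ _)).
move: EA EB; rewrite /pt /= => -[A1 A2] [B1 B2].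
set r1 : R := e1%:~R; set r2 : R := e2%:~R.
have rr1 : r1 * r1 = 1 by rewrite /r1 -intrM ee1.
have rr2 : r2 * r2 = 1 by rewrite /r2 -intrM ee2.
have Q := @quad_real ((e1 * u.1)%:~R) ((e2 * u.2)%:~R) ((e1 * v.1)%:~R) ((e2 * v.2)%:~R)
  al be ga de.
have := Q; rewrite !ler0z => /(_ h1 h2 h3 h4 al0 be0 ga0 de0).
rewrite !intrM -/r1 -/r2.
have e1' : al * (r1 * u.1%:~R) + be * (r1 * v.1%:~R) = 1.
  by transitivity (r1 * (al * u.1%:~R + be * v.1%:~R)); [ring | rewrite -A1 rr1].
have e2' : al * (r2 * u.2%:~R) + be * (r2 * v.2%:~R) = 0.
  have -> : al * (r2 * u.2%:~R) + be * (r2 * v.2%:~R) = r2 * (al * u.2%:~R + be * v.2%:~R) by ring.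
  by rewrite -A2 mulr0.
have e3' : ga * (r1 * u.1%:~R) + de * (r1 * v.1%:~R) = 0.
  have -> : ga * (r1 * u.1%:~R) + de * (r1 * v.1%:~R) = r1 * (ga * u.1%:~R + de * v.1%:~R) by ring.
  by rewrite -B1 mulr0.
have e4' : ga * (r2 * u.2%:~R) + de * (r2 * v.2%:~R) = 1.
  by transitivity (r2 * (ga * u.2%:~R + de * v.2%:~R)); [ring | rewrite -B2 rr2].
have dn' : r1 * u.1%:~R * (r2 * v.2%:~R) - r2 * u.2%:~R * (r1 * v.1%:~R) != 0.
  have -> : r1 * u.1%:~R * (r2 * v.2%:~R) - r2 * u.2%:~R * (r1 * v.1%:~R)
     = (r1 * r2) * (u.1%:~R * v.2%:~R - u.2%:~R * v.1%:~R) by ring.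
  rewrite mulf_eq0 negb_or dR andbT /r1 /r2 -intrM intr_eq0 mulf_eq0 negb_or e1n /=.
  by case: he2 => ->; rewrite ?oppr_eq0 oner_eq0.
move=> /(_ e1' e2' e3' e4' dn') HQ.
have HQ' : (e2 * u.2 = 0 /\ e1 * v.1 = 0) \/ (e1 * u.1 = 0 /\ e2 * v.2 = 0).
  case: HQ => -[/eqP X /eqP Y]; [left|right];
  by move: X Y; rewrite /r1 /r2 -!intrM !intr_eq0 => /eqP -> /eqP ->.
have hd' : u.1 * v.2 - u.2 * v.1 = 1 \/ u.1 * v.2 - u.2 * v.1 = -1 by exact: hd.
case: (quad_int he1 he2 hd' h1 h2 h3 h4 HQ') => [[U1 [U2 [V1 V2]]] | [U1 [U2 [V1 V2]]]].
  by rewrite (@Z2_eq u (e1, 0)) // (@Z2_eq v (0, e2)).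
by rewrite (@Z2_eq u (0, e2)) // (@Z2_eq v (e1, 0)) // fsetUC.
Qed.


Lemma no_same_side (F : fan2) (a b w : Z2) (t : R) : nonsingular_fan R F ->
  [fset a; w] \in cones2 F -> [fset b; w] \in cones2 F -> a != w -> b != w ->
  detZ2 a w != 0 -> detZ2 b w != 0 -> 0 < t ->
  pt R a = ((pt R b).1 + t * (pt R w).1, (pt R b).2 + t * (pt R w).2) -> False.
Proof.
move=> [_ [_ H3]] S1 S2 aw bw da db t0 EA.
have [_ HS2] := H3 _ _ (or_intror (or_intror S1)) (or_intror (or_intror S2)).
have XA : cone [fset a; w] (pt R a) /\ cone [fset b; w] (pt R a).
  split; first exact: cone_gen (fset21 _ _).
  by apply/(cone2P _ bw); exists 1, t; rewrite ler01 ltW // EA !mul1r.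
have XW : cone [fset a; w] (pt R w) /\ cone [fset b; w] (pt R w).
  by split; apply: cone_gen; apply: fset22.
have dA : (pt R a).1 * (pt R w).2 - (pt R a).2 * (pt R w).1 != 0 by rewrite -detR intr_eq0.
have full := face_full dA HS2 XA XW.
have [/(cone2P _ aw) [al [be [al0 be0 EB]]] _] := full _ (cone_gen (fset21 b w)).
have dB : (pt R b).1 * (pt R w).2 - (pt R b).2 * (pt R w).1 != 0 by rewrite -detR intr_eq0.
move: EA EB dB; rewrite /pt /=.
set B1 := (b.1)%:~R; set B2 := (b.2)%:~R; set W1 := (w.1)%:~R; set W2 := (w.2)%:~R.
set A1 := (a.1)%:~R; set A2 := (a.2)%:~R.
move=> [EA1 EA2] [EB1 EB2] dB.
rewrite EA1 EA2 in EB1 EB2.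
have k1 : B1 - al * B1 = (al * t + be) * W1 by rewrite {1}EB1; ring.
have k2 : B2 - al * B2 = (al * t + be) * W2 by rewrite {1}EB2; ring.
have : (1 - al) * (B1 * W2 - B2 * W1) = 0.
  transitivity ((B1 - al * B1) * W2 - (B2 - al * B2) * W1); first ring.
  by rewrite k1 k2; ring.
move/eqP; rewrite mulf_eq0 (negbTE dB) orbF subr_eq0 => /eqP al1.
rewrite -al1 !mul1r in EB1 EB2.
have : (t + be) * (B1 * W2 - B2 * W1) = 0.
  have h1 : (t + be) * W1 = 0 by move: k1; rewrite -al1 !mul1r subrr => <-.
  have h2 : (t + be) * W2 = 0 by move: k2; rewrite -al1 !mul1r subrr => <-.
  transitivity (B1 * ((t + be) * W2) - B2 * ((t + be) * W1)); first ring.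
  by rewrite h1 h2; ring.
move/eqP; rewrite mulf_eq0 (negbTE dB) orbF => /eqP; lra.
Qed.


Lemma orient (F : fan2) (a b w : Z2) : nonsingular_fan R F ->
  [fset a; w] \in cones2 F -> [fset b; w] \in cones2 F ->
  [fset a; w] != [fset b; w] -> 0 < w.1 -> detZ2 a w != 0 ->
  detZ2 a w = detZ2 b w -> False.
Proof.
move=> NS S1 S2 Sn w0 da dab.
have db : detZ2 b w != 0 by rewrite -dab.
have aw := detZ2_neq da; have bw := detZ2_neq db.
have ab : a != b by apply: contra Sn => /eqP ->.
have dR := congr1 (fun z : int => z%:~R : R) dab; rewrite /= !detR /pt /= in dR.
have W1n : (w.1)%:~R != 0 :> R by rewrite intr_eq0 gt_eqF.
set t : R := ((a.1)%:~R - (b.1)%:~R) / (w.1)%:~R.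
have EA : pt R a = ((pt R b).1 + t * (pt R w).1, (pt R b).2 + t * (pt R w).2).
  rewrite /pt /t /=; congr (_, _); first by field.
  have h : (a.2)%:~R * (w.1)%:~R = (b.2)%:~R * (w.1)%:~R + ((a.1)%:~R - (b.1)%:~R) * (w.2)%:~R :> R by lra.
  have -> : (a.2)%:~R = ((a.2)%:~R * (w.1)%:~R) / (w.1)%:~R :> R by field.
  by rewrite h; field.
have tn : t != 0.
  apply: contra ab => /eqP t0; move: EA; rewrite t0 !mul0r !addr0 /pt => -[/eqP h1 /eqP h2].
  by rewrite eqr_int in h1; rewrite eqr_int in h2; apply/eqP/Z2_eq; apply/eqP.
have [tp|tn'] := ltP 0 t.
  exact: (no_same_side NS S1 S2 aw bw da db tp EA).
have tneg : 0 < - t by rewrite oppr_gt0 lt_neqAle tn' andbT.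
apply: (no_same_side NS S2 S1 bw aw db da tneg).
move: EA; rewrite /pt /= => -[-> ->]; congr (_, _); ring.
Qed.


Lemma mem2_rot (p q u : Z2) : u \in [fset p; q] ->
  exists x, [fset p; q] = [fset x; u] /\ (detZ2 x u = detZ2 p q \/ detZ2 x u = - detZ2 p q).
Proof.
rewrite in_fset2 => /orP[] /eqP ->.
  by exists q; rewrite fsetUC detZ2C; split => //; right.
by exists p; split => //; left.
Qed.

Lemma sign_int (s : R) (x : int) : (s = 1 \/ s = -1) ->
  exists e : int, s = e%:~R /\ (e = 1 \/ e = -1).
Proof. by case=> ->; [exists 1 | exists (-1)]; split; rewrite ?intrN //; [left|right]. Qed.

Lemma le_int_mul (e x : int) : (0 <= e%:~R * x%:~R :> R) -> 0 <= e * x.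
Proof. by rewrite -intrM ler0z. Qed.

Lemma deg2 (F : fan2) : in_cFan_pm_sc R F -> forall u, u \in rays F ->
  exists s1 s2, [/\ s1 \in cones2 F, s2 \in cones2 F,
     s1 != s2, (u \in s1) && (u \in s2) &
     forall s, s \in cones2 F -> u \in s -> s = s1 \/ s = s2].
Proof.
move=> [NS [_ [_ [_ [_ [_ Hdeg]]]]]] u uR.
have [s1 [s2 [S1 [S2 [sn [f1 [f2 Hu]]]]]]] := Hdeg u uR.
have memC : forall s, s \in cones2 F -> is_face (@cone R [fset u]) (cone s) -> u \in s.
  move=> s sC fs; have [p [q [_ _ E dpq]]] := NS.2.1 s sC.
  rewrite E in fs *; apply: face_mem => //; last exact: NS.1.
  by apply: detZ2_neq; case: dpq => ->; rewrite ?oppr_eq0 oner_eq0.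
exists s1, s2; split => //; first by rewrite !memC.
by move=> s sC us; apply: Hu => //; apply: mem_face NS uR sC us.
Qed.

Lemma geo_inv (F : fan2) : in_cFan_pm_sc R F -> Pinv F.
Proof.
move=> H; have D2 := deg2 H.
case: H => NS [_ [Q1 [Q3 [Q2 [Hq Hdeg]]]]].
split => //; last split => //.
- move=> s sC x xs; have [u [v [uR vR E _]]] := NS.2.1 s sC.
  by move: xs; rewrite E in_fset2 => /orP[] /eqP ->.
- move=> s sC; have [u [v [uR vR E dn]]] := NS.2.1 s sC; subst s.
  have [s1 [s2 [hs1 [hs2 Hx]]]] := Hq _ (or_intror (or_intror sC)).
  have [e1 [E1 he1]] := sign_int 0 hs1; have [e2 [E2 he2]] := sign_int 0 hs2.
  have [hu1 hu2] := Hx _ (cone_gen (fset21 u v)).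
  have [hv1 hv2] := Hx _ (cone_gen (fset22 u v)).
  rewrite E1 E2 /pt /= in hu1 hu2 hv1 hv2.
  move/le_int_mul: hu1 => hu1; move/le_int_mul: hu2 => hu2.
  move/le_int_mul: hv1 => hv1; move/le_int_mul: hv2 => hv2.
  case: (he1) => e1v; case: (he2) => e2v.
  + left; subst e1 e2; exact: (quad_fix NS sC Q1 he1 he2 dn hu1 hu2 hv1 hv2).

  + right; right; right.
    rewrite e1v e2v !mul1r !mulN1r !oppr_ge0 in hu1 hu2 hv1 hv2.
    have qu : Q4 u by rewrite /Q4 hu1 hu2.
    have qv : Q4 v by rewrite /Q4 hv1 hv2.
    case: dn => dn.
      by exists v, u; split; [exact: fsetUC | exact: qv | exact: qu | rewrite detZ2C dn].
    by exists u, v; split.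
  + right; left; subst e1 e2; exact: (quad_fix NS sC Q2 he1 he2 dn hu1 hu2 hv1 hv2).
  + right; right; left; subst e1 e2; exact: (quad_fix NS sC Q3 he1 he2 dn hu1 hu2 hv1 hv2).
- move=> u uR /andP [u1 _].
  have [s1 [s2 [S1 S2 sn /andP [us1 us2] _]]] := D2 u uR.
  have [p [q [_ _ E1 d1]]] := NS.2.1 s1 S1.
  have [p' [q' [_ _ E2 d2]]] := NS.2.1 s2 S2.
  rewrite E1 in S1 sn us1; rewrite E2 in S2 sn us2.
  have [a [Ea da]] := mem2_rot us1; have [b [Eb db]] := mem2_rot us2.
  rewrite Ea in S1 sn; rewrite Eb in S2 sn.
  have da1 : detZ2 a u = 1 \/ detZ2 a u = -1.
    by case: da d1 => -> [] ->; rewrite ?opprK; [left|right|right|left].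
  have db1 : detZ2 b u = 1 \/ detZ2 b u = -1.
    by case: db d2 => -> [] ->; rewrite ?opprK; [left|right|right|left].
  have dan : detZ2 a u != 0 by case: da1 => ->; rewrite ?oppr_eq0 oner_eq0.
  case: da1 => da1; case: db1 => db1.
  + by exfalso; apply: (orient NS S1 S2 sn u1 dan); rewrite da1 db1.
  + by exists b, a; split; [exact: S2 | rewrite fsetUC | exact: db1 | rewrite detZ2C da1].
  + by exists a, b; split; [exact: S1 | rewrite fsetUC | exact: da1 | rewrite detZ2C db1].
  + by exfalso; apply: (orient NS S1 S2 sn u1 dan); rewrite da1 db1.
Qed.

End Geo.

Definition ell (u : Z2) := u.1 - u.2.

Lemma axis_a (a w : Z2) : Q4 a -> ~~ op4 a -> op4 w -> detZ2 a w = -1 -> a = (1, 0).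
Proof.
case: a w => a1 a2 [w1 w2]; rewrite /Q4 /op4 /detZ2 /= => /andP[h1 h2] h3 /andP[h4 h5] d.
have [e|e] : a1 = 0 \/ a2 = 0 by move: h3; rewrite negb_and -!leNgt; lia.
  by exfalso; subst a1; nia.
subst a2; rewrite mul0r subr0 in d.
have d' : a1 * (- w2) = 1 by rewrite mulrN d opprK.
have [] := @prod1 a1 (- w2) h1 (ltW _) (or_introl d'); first lia.
by move=> ->.
Qed.

Lemma axis_b (b w : Z2) : Q4 b -> ~~ op4 b -> op4 w -> detZ2 w b = -1 -> b = (0, -1).
Proof.
case: b w => b1 b2 [w1 w2]; rewrite /Q4 /op4 /detZ2 /= => /andP[h1 h2] h3 /andP[h4 h5] d.
have [e|e] : b1 = 0 \/ b2 = 0 by move: h3; rewrite negb_and -!leNgt; lia.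
  subst b1; rewrite mulr0 subr0 in d.
  have d' : w1 * (- b2) = 1 by rewrite mulrN d opprK.
  have [] := @prod1 w1 (- b2) (ltW h4) _ (or_introl d'); first lia.
  by move=> _ /eqP; rewrite eqr_oppLR => /eqP ->.
by exfalso; subst b2; nia.
Qed.

Lemma ell_pos (a w : Z2) : Q4 a -> detZ2 a w != 0 -> 1 <= ell a.
Proof.
case: a => a1 a2; rewrite /Q4 /ell /detZ2 /= => /andP[h1 h2] d.
have [h|h] : a1 - a2 = 0 \/ 1 <= a1 - a2 by lia.
  have e1 : a1 = 0 by lia.
  have e2 : a2 = 0 by lia.
  by move: d; rewrite e1 e2 !mul0r subr0 eqxx.
by [].
Qed.

Lemma sum_nb (a b w : Z2) : Q4 a -> Q4 b -> op4 w -> detZ2 a w = -1 -> detZ2 w b = -1 ->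
  ell a <= ell w -> ell b <= ell w -> a.1 + b.1 = w.1 /\ a.2 + b.2 = w.2.
Proof.
move=> qa qb ow da db la lb.
have La : 1 <= ell a by apply: (@ell_pos a w qa); rewrite da.
have Lb : 1 <= ell b by apply: (@ell_pos b w qb); rewrite detZ2C db.
have i1 : detZ2 a b * w.1 = detZ2 w b * a.1 + detZ2 a w * b.1 by rewrite /detZ2; ring.
have i2 : detZ2 a b * w.2 = detZ2 w b * a.2 + detZ2 a w * b.2 by rewrite /detZ2; ring.
rewrite da db in i1 i2.
move: ow la lb La Lb; rewrite /op4 /ell => /andP [w1 w2] la lb La Lb.
set c := detZ2 a b in i1 i2.
have i3 : c * (w.1 - w.2) = - ((a.1 - a.2) + (b.1 - b.2)) by rewrite mulrBr i1 i2; ring.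
have c1 : c <= -1 by nia.
have c2 : -2 <= c by nia.
have [ce|ce] : c = -1 \/ c = -2 by lia.
  by rewrite ce in i1 i2; split; lia.
exfalso.
have ea : a.1 - a.2 = w.1 - w.2 by rewrite ce in i3; lia.
have ea2 : a.2 = a.1 - (w.1 - w.2) by lia.
have h : (w.1 - w.2) * (w.1 - a.1) = -1 by rewrite -da /detZ2 ea2; ring.
have [] := @unit_prod _ _ (or_intror h); lia.
Qed.



Lemma max_exists (s : seq Z2) : has op4 s ->
  exists2 w, w \in s & op4 w /\ forall u, u \in s -> op4 u -> ell u <= ell w.
Proof.
elim: s => // x s IH /=.
case ox: (op4 x) => /= H.
  case hs: (has op4 s).
    have [w ws [ow Hw]] := IH hs.
    have [le|lt] := leP (ell x) (ell w).
      exists w; first by rewrite inE ws orbT.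
      by split => // u; rewrite inE => /orP[/eqP ->|us] ou; [|apply: Hw].
    exists x; first by rewrite inE eqxx.
    split => // u; rewrite inE => /orP[/eqP ->|us] ou //.
    by apply: le_trans (Hw u us ou) (ltW lt).
  exists x; first by rewrite inE eqxx.
  split => // u; rewrite inE => /orP[/eqP ->|us] ou //.
  by move/hasPn: hs => /(_ u us); rewrite ou.
have [w ws [ow Hw]] := IH H.
exists w; first by rewrite inE ws orbT.
split => // u; rewrite inE => /orP[/eqP ->|us] ou; last by apply: Hw.
by rewrite ox in ou.
Qed.

Lemma neq_by (x : Z2) (s t : {fset Z2}) : x \in s -> x \notin t -> s != t.
Proof. by move=> xs; apply: contra => /eqP <-. Qed.

Lemma notin2 (x p q : Z2) : x != p -> x != q -> x \notin [fset p; q].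
Proof. by move=> xp xq; rewrite in_fset2 negb_or xp xq. Qed.

Lemma op4_notq (w : Z2) : op4 w -> [/\ w \notin q1, w \notin q2, w \notin q3 & w \notin q4].
Proof.
case: w => w1 w2; rewrite /op4 /= => /andP [h1 h2].
rewrite /q1 /q2 /q3 /q4 !in_fset2 !xpair_eqE /=.
split; apply/negP => /orP [] /andP [/eqP e1 /eqP e2]; lia.
Qed.

Lemma cone4 (u v : Z2) : Q4 u -> Q4 v -> ~~ op4 u -> ~~ op4 v -> detZ2 u v = -1 ->
  u = (1, 0) /\ v = (0, -1).
Proof.
case: u v => u1 u2 [v1 v2]; rewrite /Q4 /op4 /detZ2 /= => /andP[h1 h2] /andP[h3 h4] h5 h6 d.
have [e|e] : u1 = 0 \/ u2 = 0 by move: h5; rewrite negb_and -!leNgt; lia.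
  by exfalso; subst u1; nia.
subst u2; have [f|f] : v1 = 0 \/ v2 = 0 by move: h6; rewrite negb_and -!leNgt; lia.
  subst v1; rewrite mul0r subr0 in d.
  have d' : u1 * (- v2) = 1 by rewrite mulrN d opprK.
  have [] := @prod1 u1 (- v2) h1 _ (or_introl d'); first lia.
  by move=> -> /eqP; rewrite eqr_oppLR => /eqP ->.
by exfalso; subst v2; move: d; rewrite mulr0 mul0r subrr.
Qed.

Lemma fan_eta (F : fan2) : F = Fan2 (rays F) (cones2 F).
Proof. by case: F. Qed.

Lemma base_case (F : fan2) : Pinv F -> ~~ has op4 (rays F) -> F = Sigma0.
Proof.
case=> Q1 Q2 Q3 P2 [P3 P4 P5] nh.
have nop : forall u, u \in rays F -> ~~ op4 u.
  by move=> u uR; apply: contra nh => ou; apply/hasP; exists u.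
have Csub : forall s, s \in cones2 F -> s \in [fset q1; q2; q3; q4].
  move=> s sC; rewrite !inE.
  case: (P3 s sC) => [->|[->|[->|[u [v [E qu qv d]]]]]]; rewrite ?eqxx ?orbT //.
  subst s.
  have [-> ->] := cone4 qu qv (nop _ (P2 _ sC _ (fset21 u v))) (nop _ (P2 _ sC _ (fset22 u v))) d.
  by rewrite eqxx !orbT.
have e10 : ((1, 0) : Z2) \in rays F by apply: (P2 q1 Q1); rewrite /q1 fset21.
have q4C : q4 \in cones2 F.
  have [s1 [s2 [S1 S2 sn /andP[i1 i2] _]]] := P4 _ e10.
  have h : forall s, s \in cones2 F -> ((1, 0) : Z2) \in s -> s = q1 \/ s = q4.
    move=> s sC hs; move: (Csub s sC); rewrite !inE => /orP[/orP[/orP[]|]|] /eqP E.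
    - by left.
    - by move: hs; rewrite E /q2 in_fset2 !xpair_eqE.
    - by move: hs; rewrite E /q3 in_fset2 !xpair_eqE.
    - by right.
  case: (h _ S1 i1) => E1; last by rewrite -E1.
  case: (h _ S2 i2) => E2; last by rewrite -E2.
  by move: sn; rewrite E1 E2 eqxx.
have Ceq : cones2 F = [fset q1; q2; q3; q4].
  apply/fsetP => s; apply/idP/idP; first exact: Csub.
  by rewrite !inE => /orP[/orP[/orP[]|]|] /eqP ->.
have Req : rays F = [fset ((1, 0) : Z2); (0, 1); (-1, 0); (0, -1)].
  apply/fsetP => u; apply/idP/idP.
    move=> uR; have [s1 [_ [S1 _ _ /andP[i1 _] _]]] := P4 u uR.
    move: (Csub _ S1); rewrite !inE => /orP[/orP[/orP[]|]|] /eqP E; subst s1;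
      move: i1; rewrite /q1 /q2 /q3 /q4 !in_fset2 => /orP[] /eqP ->; rewrite ?eqxx ?orbT //.
  rewrite !inE => /orP[/orP[/orP[]|]|] /eqP ->.
  - by apply: (P2 q1 Q1); rewrite /q1 fset21.
  - by apply: (P2 q1 Q1); rewrite /q1 fset22.
  - by apply: (P2 q2 Q2); rewrite /q2 fset21.
  - by apply: (P2 q3 Q3); rewrite /q3 fset22.
by rewrite [F]fan_eta Ceq Req.
Qed.



Lemma det_self (x : Z2) : detZ2 x x = 0.
Proof. by rewrite /detZ2 mulrC subrr. Qed.

Lemma other (F : fan2) u t : Pinv F -> u \in rays F -> t \in cones2 F -> u \in t ->
  exists t', [/\ t' \in cones2 F, t' != t, u \in t' &
     forall s, s \in cones2 F -> u \in s -> s = t \/ s = t'].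
Proof.
case=> _ _ _ _ [_ P4 _] uR tC ut.
have [s1 [s2 [S1 S2 sn /andP[i1 i2] H]]] := P4 u uR.
case: (H t tC ut) => E; rewrite E.
- by exists s2; split => //; rewrite eq_sym.
- exists s1; split => //.
  by move=> s sC us; case: (H s sC us) => ->; [right|left].
Qed.

Lemma three (F : fan2) x s t r : Pinv F -> x \in rays F ->
  s \in cones2 F -> t \in cones2 F -> r \in cones2 F ->
  x \in s -> x \in t -> x \in r -> s != t -> s != r -> t != r -> False.
Proof.
case=> _ _ _ _ [_ P4 _] xR sC tC rC xs xt xr st sr tr.
have [s1 [s2 [_ _ _ _ H]]] := P4 x xR.
move: st sr tr.
by case: (H s sC xs) => ->; case: (H t tC xt) => ->; case: (H r rC xr) => ->; rewrite ?eqxx.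
Qed.

Lemma op4_ell (w : Z2) : op4 w -> 2 <= ell w.
Proof. by case: w => w1 w2; rewrite /op4 /ell /= => /andP[]; lia. Qed.

Lemma step (F : fan2) w : Pinv F -> w \in rays F -> op4 w ->
  (forall u, u \in rays F -> op4 u -> ell u <= ell w) ->
  exists F' a b, [/\ Pinv F', (#|` rays F'| < #|` rays F|)%N, F = subdiv F' a b,
     a != b & [fset a; b] \in cones2 F'].
Proof.
move=> PF wR ow wmax.
have PF' := PF; case: PF' => Q1 Q2 Q3 P2 [P3 P4 P5].
have [a [b [AC BC da db]]] := P5 w wR ow.
set A := [fset a; w] in AC *; set B := [fset w; b] in BC *.
have aw : a != w by apply: detZ2_neq; rewrite da oppr_eq0 oner_eq0.
have wb : w != b by apply: detZ2_neq; rewrite db oppr_eq0 oner_eq0.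
have aR : a \in rays F by apply: (P2 A AC); rewrite fset21.
have bR : b \in rays F by apply: (P2 B BC); rewrite fset22.
have q4of : forall s x, s \in cones2 F -> w \in s -> x \in s -> Q4 x.
  move=> s x sC ws xs.
  have [n1 n2 n3 _] := op4_notq ow.
  case: (P3 s sC) => [E|[E|[E|[u [v [E qu qv _]]]]]]; subst s.
  - by rewrite ws in n1.
  - by rewrite ws in n2.
  - by rewrite ws in n3.
  by move: xs; rewrite in_fset2 => /orP[] /eqP ->.
have qa : Q4 a by apply: (q4of A) => //; rewrite ?fset21 ?fset22.
have qb : Q4 b by apply: (q4of B) => //; rewrite ?fset21 ?fset22.
have lw : 2 <= ell w by apply: op4_ell.
have la : ell a <= ell w.
  have [oa|noa] := boolP (op4 a); first exact: (wmax a aR oa).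
  rewrite (axis_a qa noa ow da) /ell /= subr0; exact: le_trans _ lw.
have lb : ell b <= ell w.
  have [ob|nob] := boolP (op4 b); first exact: (wmax b bR ob).
  rewrite (axis_b qb nob ow db) /ell /= sub0r opprK; exact: le_trans _ lw.
have [e1 e2] := sum_nb qa qb ow da db la lb.
have wab : addZ2 a b = w by apply: Z2_eq.
have dab : detZ2 a b = -1 by rewrite -da /detZ2 -e1 -e2; ring.
have ab : a != b by apply: detZ2_neq; rewrite dab oppr_eq0 oner_eq0.
set AB := [fset a; b].
have wA : w \in A by rewrite fset22.
have wB : w \in B by rewrite fset21.
have aA : a \in A by rewrite fset21.
have bB : b \in B by rewrite fset22.
have aB : a \notin B by apply: notin2; rewrite // eq_sym.
have bA : b \notin A by apply: notin2; rewrite // eq_sym.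
have wAB : w \notin AB by apply: notin2; rewrite // eq_sym.
have AnB : A != B by apply: (neq_by aA aB).
have AnAB : A != AB by apply: (neq_by wA wAB).
have BnAB : B != AB by apply: (neq_by wB wAB).
have ABn : AB \notin cones2 F.
  apply/negP => ABC.
  have aAB : a \in AB by rewrite fset21.
  have [oa|noa] := boolP (op4 a).
    have [a0 [b0 [C0 _ d0 _]]] := P5 a aR oa.
    have a0a : a0 != a by apply: detZ2_neq; rewrite d0 oppr_eq0 oner_eq0.
    have a0w : a0 != w.
      by apply: contraPneq d0 => ->; rewrite detZ2C da opprK.
    have a0b : a0 != b.
      by apply: contraPneq d0 => ->; rewrite detZ2C dab opprK.
    have h1 : [fset a0; a] != A by apply: (@neq_by a0); rewrite ?fset21 // notin2.
    have h2 : [fset a0; a] != AB by apply: (@neq_by a0); rewrite ?fset21 // notin2.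
    exact: (three PF aR C0 AC ABC (fset22 _ _) aA aAB h1 h2 AnAB).
  have ea := axis_a qa noa ow da.
  have [n1 _ _ _] := op4_notq ow.
  have h1 : q1 != A by rewrite eq_sym; apply: (neq_by wA n1).
  have bq1 : b \notin q1.
    apply: notin2; first by rewrite -ea eq_sym.
    by apply: contraTneq qb => ->.
  have h2 : q1 != AB by rewrite eq_sym; apply: (neq_by (fset22 a b) bq1).
  have aq1 : a \in q1 by rewrite ea fset21.
  exact: (three PF aR Q1 AC ABC aq1 aA aAB h1 h2 AnAB).
set C' := (cones2 F `\` [fset A; B]) `|` [fset AB].
have inC' : forall s, (s \in C') = ((s \in cones2 F) && (s != A) && (s != B)) || (s == AB).
  move=> s; rewrite /C' in_fsetU in_fsetD in_fset2 in_fset1 negb_or.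
  by case: (s \in cones2 F); case: (s == A); case: (s == B).
have wOnly : forall s, s \in cones2 F -> w \in s -> s = A \/ s = B.
  have [t' [T'C t'A wt' Ht']] := other PF wR AC wA.
  case: (Ht' B BC wB) => EB; first by rewrite EB eqxx in AnB.
  by move=> s sC ws; case: (Ht' s sC ws) => ->; [left|right].
have notw : forall s x, s \in cones2 F -> s != A -> s != B -> x \in s -> x != w.
  move=> s x sC sA sB xs; apply/eqP => E; rewrite E in xs.
  by case: (wOnly s sC xs) => E'; [rewrite E' eqxx in sA | rewrite E' eqxx in sB].
have AB' : AB \in C' by rewrite inC' eqxx orbT.
have inC'C : forall s, s \in cones2 F -> s != A -> s != B -> s \in C'.
  by move=> s sC sA sB; rewrite inC' sC sA sB.
have uA : forall u, u != a -> u != w -> u \notin A by move=> u; apply: notin2.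
have uB : forall u, u != w -> u != b -> u \notin B by move=> u; apply: notin2.
have [n1 n2 n3 _] := op4_notq ow.
exists (Fan2 (rays F `\ w) C'), a, b; split => //.
- split => /=.
  + by apply: inC'C => //; rewrite eq_sym; [apply: (neq_by wA n1) | apply: (neq_by wB n1)].
  + by apply: inC'C => //; rewrite eq_sym; [apply: (neq_by wA n2) | apply: (neq_by wB n2)].
  + by apply: inC'C => //; rewrite eq_sym; [apply: (neq_by wA n3) | apply: (neq_by wB n3)].
  + move=> s; rewrite inC' => /orP[/andP[/andP[sC sA] sB] | /eqP ->] x xs; rewrite in_fsetD1.
      by rewrite (notw s x sC sA sB xs) (P2 s sC x xs).
    move: xs; rewrite in_fset2 => /orP[] /eqP ->; first by rewrite aw aR.
    by rewrite eq_sym wb bR.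
  split.
  + move=> s; rewrite inC' => /orP[/andP[/andP[sC _] _] | /eqP ->]; first exact: P3.
    by right; right; right; exists a, b; split.
  + move=> u; rewrite in_fsetD1 => /andP[uw uR].
    have [ua|una] := eqVneq u a.
      rewrite ua; have [t' [t'C t'A at' Ht']] := other PF aR AC aA.
      have t'B : t' != B by apply: (neq_by at' aB).
      exists AB, t'; split => //.
      * by apply: inC'C.
      * by apply/eqP => E; rewrite E t'C in ABn.
      * by rewrite fset21 at'.
      move=> s; rewrite inC' => /orP[/andP[/andP[sC sA] sB] | /eqP ->] hs; last by left.
      by right; case: (Ht' s sC hs) => // E; rewrite E eqxx in sA.
    have [ub|unb] := eqVneq u b.
      rewrite ub; have [t' [t'C t'B bt' Ht']] := other PF bR BC bB.
      have t'A : t' != A by apply: (neq_by bt' bA).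
      exists AB, t'; split => //.
      * by apply: inC'C.
      * by apply/eqP => E; rewrite E t'C in ABn.
      * by rewrite fset22 bt'.
      move=> s; rewrite inC' => /orP[/andP[/andP[sC sA] sB] | /eqP ->] hs; last by left.
      by right; case: (Ht' s sC hs) => // E; rewrite E eqxx in sB.
    have [s1 [s2 [S1 S2 sn /andP[i1 i2] H]]] := P4 u uR.
    have nA := uA u una uw; have nB := uB u uw unb.
    exists s1, s2; split => //.
    * by apply: inC'C => //; apply: (neq_by i1).
    * by apply: inC'C => //; apply: (neq_by i2).
    * by rewrite i1 i2.
    move=> s; rewrite inC' => /orP[/andP[/andP[sC sA] sB] | /eqP ->] hs; first exact: H.
    by exfalso; move: hs; rewrite in_fset2 (negbTE una) (negbTE unb).
  + move=> u; rewrite in_fsetD1 => /andP[uw uR] ou.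
    have [ua|una] := eqVneq u a.
      rewrite ua; rewrite ua in ou.
      have [a0 [b0 [C0 _ d0 _]]] := P5 a aR ou.
      have a0a : a0 != a by apply: detZ2_neq; rewrite d0 oppr_eq0 oner_eq0.
      have a0w : a0 != w by apply: contraPneq d0 => ->; rewrite detZ2C da opprK.
      exists a0, b; split => //.
      apply: inC'C => //; first by apply: (neq_by (fset21 a0 a)); apply: uA.
      by apply: (neq_by (fset22 a0 a)).
    have [ub|unb] := eqVneq u b.
      rewrite ub; rewrite ub in ou.
      have [a0 [b0 [_ C0 _ d0]]] := P5 b bR ou.
      have b0b : b0 != b by rewrite eq_sym; apply: detZ2_neq; rewrite d0 oppr_eq0 oner_eq0.
      have b0w : b0 != w by apply: contraPneq d0 => ->; rewrite detZ2C db opprK.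
      exists a, b0; split => //.
      apply: inC'C => //; first by apply: (neq_by (fset21 b b0)).
      by apply: (neq_by (fset22 b b0)); apply: uB.
    have [a0 [b0 [C0 C1 d0 d1]]] := P5 u uR ou.
    have nA := uA u una uw; have nB := uB u uw unb.
    exists a0, b0; split => //.
      by apply: inC'C => //; apply: (neq_by (fset22 a0 u)).
    by apply: inC'C => //; apply: (neq_by (fset21 u b0)).
- by rewrite /= (cardfsD1 w (rays F)) wR add1n ltnSn.
- rewrite [F in LHS]fan_eta /subdiv /= wab fsetD1K //; congr Fan2.
  have Bw : [fset b; w] = B by rewrite /B fsetUC.
  rewrite Bw; apply/fsetP => s.
  rewrite in_fsetU in_fsetD in_fset1 inC' in_fset2.
  have [->|sA] := eqVneq s A; first by rewrite AC orbT.
  have [->|sB] := eqVneq s B; first by rewrite BC !orbT.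
  have [->|sAB] := eqVneq s AB; first by rewrite (negbTE ABn).
  by case: (s \in cones2 F).
Qed.


Theorem proposition2p10 (R : realType) (F : fan2) :
  in_cFan_pm_sc R F -> obtained_by_subdivisions Sigma0 F.
Proof.
move=> H; have P := geo_inv H.
suff main : forall n (G : fan2), (#|` rays G| <= n)%N -> Pinv G ->
    obtained_by_subdivisions Sigma0 G.
  exact: (main _ F (leqnn _) P).
elim=> [|n IH] G hn PG.
  have [hx|nh] := boolP (has op4 (rays G)); last by rewrite (base_case PG nh); exact: obs_refl.
  have [w wR [ow wmax]] := max_exists hx.
  have [G' [a [b [PG' lt _ _ _]]]] := step PG wR ow wmax.
  by have := leq_trans lt hn.
have [hx|nh] := boolP (has op4 (rays G)); last by rewrite (base_case PG nh); exact: obs_refl.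
have [w wR [ow wmax]] := max_exists hx.
have [G' [a [b [PG' lt -> ab abC]]]] := step PG wR ow wmax.
apply: obs_step => //; apply: IH => //.
by rewrite -ltnS; apply: leq_trans lt hn.
Qed.
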